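(* There exists a history-deterministic generalised coBüchi automaton $\mathcal{A}$ over an alphabet $\Sigma$ such that every history-deterministic generalised Büchi automaton recognising $\Sigma^\omega\setminus\mathcal{L}(\mathcal{A})$ has strictly more states than $\mathcal{A}$.
   Context: An automaton is a tuple $(Q,\Sigma,q_{\mathrm{init}},\Delta,\Gamma,\mathrm{col},W)$ with finite state set $Q$, finite input alphabet $\Sigma$, initial state, transitions $\Delta\subseteq Q\times\Sigma\times Q$, output alphabet $\Gamma$, labelling $\mathrm{col}:\Delta\to\Gamma$, acceptance condition $W\subseteq\Gamma^\omega$. A run on $w=a_1a_2\cdots$ is a sequence $(q_0,a_1,q_1)(q_1,a_2,q_2)\cdots$ of transitions with $q_0=q_{\mathrm{init}}$, accepting if its label sequence is in $W$; $\mathcal{L}(\mathcal{A})$ is the set of words having an accepting run. With a finite set $C$ of output colours and $\Gamma=2^C$: generalised Büchi means $W=\{x : \text{every } c\in C \text{ occurs in infinitely many letters of } x\}$; generalised coBüchi means $W=\{x : \text{some } c\in C \text{ occurs in only finitely many letters of } x\}$. A resolver is a map $\sigma:\Sigma^+\to\Delta$ such that for every $w=a_0a_1\cdots$, $\sigma(a_0)\sigma(a_0a_1)\cdots$ is a run on $w$, accepting whenever $w\in\mathcal{L}(\mathcal{A})$; an automaton is history-deterministic if it has a resolver. The number of states is $|Q|$. *)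

(* Defs.v *)
From mathcomp Require Import all_boot.
Set Implicit Arguments. Unset Strict Implicit. Unset Printing Implicit Defensive.

(* An automaton over the finite input alphabet Sigma, with finite state set
   [st], colour set [colours] (output alphabet Gamma = 2^colours), initial
   state, transition relation Delta ⊆ Q × Σ × Q, labelling col : Delta -> Gamma
   (given as a function on all triples; only its values on Delta matter) and
   acceptance condition W ⊆ Gamma^ω. *)
Record automaton (Sigma : finType) := Automaton {
  st : finType;
  colours : finType;
  init : st;
  delta : pred (st * Sigma * st);
  col : st * Sigma * st -> {set colours};
  acc : (nat -> {set colours}) -> Prop
}.

Arguments delta {Sigma} a _.
Arguments col {Sigma} a _.
Arguments acc {Sigma} a _.
Arguments init {Sigma} a.
Arguments st {Sigma} a.
Arguments colours {Sigma} a.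

Definition word (Sigma : finType) := nat -> Sigma.

Definition is_run (Sigma : finType) (A : automaton Sigma) (w : word Sigma)
  (r : nat -> st A * Sigma * st A) : Prop :=
  (r 0).1.1 = init A /\
  forall i, delta A (r i) /\ (r i).1.2 = w i /\ (r i).2 = (r i.+1).1.1.

Arguments is_run {Sigma} A w r.

Definition accepting_run (Sigma : finType) (A : automaton Sigma)
  (r : nat -> st A * Sigma * st A) : Prop :=
  acc A (fun i => col A (r i)).

Arguments accepting_run {Sigma} A r.

Definition accepts (Sigma : finType) (A : automaton Sigma) (w : word Sigma) : Prop :=
  exists r, is_run A w r /\ accepting_run A r.

Arguments accepts {Sigma} A w.

Definition genBuchi_cond (C : finType) (x : nat -> {set C}) : Prop :=
  forall c : C, forall n, exists2 m, n <= m & c \in x m.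

Definition genCoBuchi_cond (C : finType) (x : nat -> {set C}) : Prop :=
  exists c : C, exists n, forall m, n <= m -> c \notin x m.

Definition is_genBuchi (Sigma : finType) (A : automaton Sigma) : Prop :=
  forall x, acc A x <-> genBuchi_cond x.

Definition is_genCoBuchi (Sigma : finType) (A : automaton Sigma) : Prop :=
  forall x, acc A x <-> genCoBuchi_cond x.

Definition prefix (Sigma : finType) (w : word Sigma) (n : nat) : seq Sigma :=
  mkseq w n.

(* sigma : Σ^+ -> Δ (values on the empty word are irrelevant) *)
Definition is_resolver (Sigma : finType) (A : automaton Sigma)
  (sigma : seq Sigma -> st A * Sigma * st A) : Prop :=
  forall w : word Sigma,
    let r := fun i => sigma (prefix w i.+1) in
    is_run A w r /\ (accepts A w -> accepting_run A r).

Arguments is_resolver {Sigma} A sigma.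

Definition history_deterministic (Sigma : finType) (A : automaton Sigma) : Prop :=
  exists sigma, is_resolver A sigma.

Arguments history_deterministic {Sigma} A.
Arguments is_genBuchi {Sigma} A.
Arguments is_genCoBuchi {Sigma} A.

(* Main.v *)
From Stdlib Require Import NArith ClassicalEpsilon Classical.
Require Import Defs.
From mathcomp Require Import all_boot.
Set Implicit Arguments. Unset Strict Implicit. Unset Printing Implicit Defensive.

Definition vw (k : nat) : nat := nth 2 [:: 0; 1; 2; 1; 0; 2; 2] k.
Definition nN (y : nat) : N := N.of_nat y.
Definition getm (M : seq N) x y := N.testbit (nth 0%num M x) (nN y).
Definition mkrow n (f : nat -> bool) : N :=
  foldr (fun y acc => if f y then N.setbit acc (nN y) else acc) 0%num (iota 0 n).
Definition sqrow n (M : seq N) x : N :=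
  foldr (fun z acc => if getm M x z then N.lor acc (nth 0%num M z) else acc) (nth 0%num M x) (iota 0 n).
Definition sqm n (M : seq N) : seq N := [seq sqrow n M x | x <- iota 0 n].
Definition initm n (A : seq N) := [seq N.setbit (nth 0%num A x) (nN x) | x <- iota 0 n].
Definition closureA n (A : seq N) := sqm n (sqm n (sqm n (sqm n (initm n A)))).
Definition adj n (E : nat -> nat -> bool) : seq N := [seq mkrow n (E x) | x <- iota 0 n].
Definition bit (bs : seq bool) t := nth false bs t.
Definition tsrc t := nth 0 [:: 0;0;0;0;0;0;1;1;1;1;1;1] t.
Definition tlab t := nth 0 [:: 0;0;1;1;2;2;0;0;1;1;2;2] t.
Definition ttgt t := nth 0 [:: 0;1;0;1;0;1;0;1;0;1;0;1] t.
Definition nst u := nth 0 [:: 0;0;0;0;0;0;0;1;1;1;1;1;1;1] u.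
Definition nph u := nth 0 [:: 0;1;2;3;4;5;6;0;1;2;3;4;5;6] u.
Definition sc7 k := nth 0 [:: 1;2;3;4;5;6;0] k.
Definition phs l := nth [::] [:: [:: 0; 4]; [:: 1; 3]; [:: 2; 5; 6]] l.
Definition tr s l s' := s * 6 + l * 2 + s'.
Definition nd s k := s * 7 + k.
Definition prodA bs : seq N :=
  [seq foldr (fun s' acc => if bit bs (tr (nst u) (vw (nph u)) s')
                            then N.setbit acc (nN (nd s' (sc7 (nph u)))) else acc) 0%num [:: 0; 1]
  | u <- iota 0 14].
Definition Eline (p : nat * nat) bs e f :=
  [&& bit bs e, bit bs f, ttgt e == tsrc f & (tlab e, tlab f) != p].
Definition closedm n (A M : seq N) :=
  all (fun x => getm M x x && all (fun u => getm M x u ==>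
        (N.ldiff (nth 0%num A u) (nth 0%num M x) =? 0)%num) (iota 0 n)) (iota 0 n).
Definition Pc bs :=
  let R := closureA 14 (prodA bs) in
  has (bit bs) (iota 0 12) &&
  has (fun x => all (fun t => bit bs t ==> has (fun k =>
       getm R x (nd (tsrc t) k) && getm R (nd (ttgt t) (sc7 k)) x) (phs (tlab t))) (iota 0 12))
    (iota 0 14).
Definition Qc p bs :=
  let R := closureA 12 (adj 12 (Eline p bs)) in
  has (fun e0 => bit bs e0 && all (fun f => bit bs f ==> getm R e0 f && getm R f e0) (iota 0 12)) (iota 0 12)
  && all (fun e => bit bs e ==> has (Eline p bs e) (iota 0 12)) (iota 0 12).
Fixpoint allbl n : seq (seq bool) :=
  if n is n'.+1 then [seq b :: l | b <- [:: false; true], l <- allbl n'] else [:: [::]].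
Definition fincheck :=
  all (fun bs => closedm 14 (prodA bs) (closureA 14 (prodA bs)) &&
                 (Pc bs ==> (Qc (0,1) bs || Qc (1,0) bs))) (allbl 12).
Lemma fincheck_ok : fincheck.
Proof. vm_compute. reflexivity. Qed.

Lemma all_iota (P : pred nat) n : all P (iota 0 n) -> forall x, x < n -> P x.
Proof. by move=> /allP H x Hx; apply: H; rewrite mem_iota. Qed.

Lemma tr_facts s l s' : s < 2 -> l < 3 -> s' < 2 ->
  [/\ tsrc (tr s l s') = s, tlab (tr s l s') = l, ttgt (tr s l s') = s' & tr s l s' < 12].
Proof.
have H : all (fun s => all (fun l => all (fun s' =>
   [&& tsrc (tr s l s') == s, tlab (tr s l s') == l, ttgt (tr s l s') == s' & tr s l s' < 12])
   (iota 0 2)) (iota 0 3)) (iota 0 2) by vm_compute.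
move=> hs hl hs'.
have := all_iota (all_iota (all_iota H hs) hl) hs'.
by case/and4P => /eqP -> /eqP -> /eqP -> ->.
Qed.

Lemma nd_facts s k : s < 2 -> k < 7 -> [/\ nst (nd s k) = s, nph (nd s k) = k & nd s k < 14].
Proof.
have H : all (fun s => all (fun k =>
   [&& nst (nd s k) == s, nph (nd s k) == k & nd s k < 14]) (iota 0 7)) (iota 0 2) by vm_compute.
move=> hs hk; have := all_iota (all_iota H hs) hk.
by case/and3P => /eqP -> /eqP -> ->.
Qed.

Lemma k_facts k : k < 7 -> [/\ k \in phs (vw k), vw k < 3 & sc7 k = k.+1 %% 7].
Proof.
have H : all (fun k => [&& k \in phs (vw k), vw k < 3 & sc7 k == k.+1 %% 7]) (iota 0 7) by vm_compute.
by move=> hk; have := all_iota H hk; case/and3P => -> -> /eqP ->.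
Qed.

Lemma phs_facts l k : k \in phs l -> k < 7 /\ vw k = l.
Proof.
have H : all (fun l => all (fun k => (k < 7) && (vw k == l)) (phs l)) (iota 0 3) by vm_compute.
case: (ltnP l 3) => hl.
  by move=> hk; have := allP (all_iota H hl) k hk; case/andP => -> /eqP ->.
by rewrite /phs nth_default.
Qed.

Lemma t_facts t : t < 12 -> tsrc t < 2 /\ ttgt t < 2.
Proof.
have H : all (fun t => (tsrc t < 2) && (ttgt t < 2)) (iota 0 12) by vm_compute.
by move=> ht; have := all_iota H ht; case/andP.
Qed.

Definition reach (L : rel nat) x y := exists p, path L x p /\ last x p = y.

Lemma reach_refl (L : rel nat) x : reach L x x.
Proof. by exists [::]. Qed.

Lemma reach_trans (L : rel nat) x y z : reach L x y -> reach L y z -> reach L x z.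
Proof.
move=> [p [hp lp]] [q [hq lq]]; exists (p ++ q); rewrite cat_path last_cat lp hp.
by split.
Qed.

Lemma reach_step (L : rel nat) x y : L x y -> reach L x y.
Proof. by move=> h; exists [:: y]; rewrite /= h. Qed.

Lemma nN_inj : injective nN.
Proof. by move=> x y /Nat2N.inj. Qed.

Lemma testbit_setbit a x y : N.testbit (N.setbit a (nN x)) (nN y) = (x == y) || N.testbit a (nN y).
Proof.
rewrite N.setbit_eqb; congr (_ || _).
case: (eqVneq x y) => [->|ne]; first by apply/N.eqb_eq.
by apply/N.eqb_neq => /nN_inj; apply/eqP.
Qed.

Lemma mkrow_sound n f y : N.testbit (mkrow n f) (nN y) -> f y.
Proof.
rewrite /mkrow; elim: (iota 0 n) => [|z l IH] /=; first by [].
case fz: (f z) => //; rewrite testbit_setbit; case/orP => // /eqP <-; done.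
Qed.

Lemma nth_iota_map (T : Type) (x0 : T) (g : nat -> T) n x : x < n ->
  nth x0 [seq g y | y <- iota 0 n] x = g x.
Proof.
move=> hx; rewrite (nth_map 0); last by rewrite size_iota.
by rewrite nth_iota.
Qed.

Lemma initm_sound n (L : rel nat) x y : x < n -> getm (initm n (adj n L)) x y -> (x == y) || L x y.
Proof.
move=> hx; rewrite /getm /initm nth_iota_map // testbit_setbit.
case/orP => [->//|]; rewrite /adj nth_iota_map // => /mkrow_sound ->; by rewrite orbT.
Qed.

Lemma sqm_sound n (L : rel nat) (M : seq N) :
  (forall x y, x < n -> getm M x y -> reach L x y) ->
  forall x y, x < n -> getm (sqm n M) x y -> reach L x y.
Proof.
move=> HM x y hx; rewrite /getm /sqm nth_iota_map // /sqrow.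
have : forall z, z \in iota 0 n -> z < n by move=> z; rewrite mem_iota.
elim: (iota 0 n) => [|z l IH] hl /=; first by apply: HM.
have hz : z < n by apply: hl; rewrite inE eqxx.
have hl' : forall z, z \in l -> z < n by move=> z' hz'; apply: hl; rewrite inE hz' orbT.
case: ifP => hxz; last by apply: IH.
rewrite N.lor_spec; case/orP; first by apply: IH.
move=> hzy; apply: (@reach_trans _ _ z); first by apply: HM.
by apply: HM.
Qed.

Lemma closure_sound n (L : rel nat) x y : x < n -> getm (closureA n (adj n L)) x y -> reach L x y.
Proof.
move=> hx; rewrite /closureA.
have H0 : forall x y, x < n -> getm (initm n (adj n L)) x y -> reach L x y.
  move=> x' y' hx' /(initm_sound hx') /orP [/eqP ->|h]; first exact: reach_refl.
  exact: reach_step.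
by apply: (sqm_sound (sqm_sound (sqm_sound (sqm_sound H0)))).
Qed.

Lemma closedm_refl n A M x : closedm n A M -> x < n -> getm M x x.
Proof. by move=> H hx; have /andP[] := all_iota H hx. Qed.

Lemma closedm_step n A M x u w : closedm n A M -> x < n -> u < n -> getm M x u ->
  N.testbit (nth 0%num A u) (nN w) -> getm M x w.
Proof.
move=> H hx hu hxu hw; have /andP[_ H2] := all_iota H hx.
have /implyP/(_ hxu)/N.eqb_eq h0 := all_iota H2 hu.
have := N.ldiff_spec (nth 0%num A u) (nth 0%num M x) (nN w).
rewrite h0 N.bits_0 hw /= /getm; by case: (N.testbit _ _).
Qed.

Lemma allbl_mem bs : bs \in allbl (size bs).
Proof.
elim: bs => [|b bs IH] //=.
by case: b; rewrite !mem_cat ?(map_f (fun l => _ :: l) IH) ?orbT.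
Qed.

Lemma last_in (e : nat) W : W != [::] -> last e W \in W.
Proof. by case: W => [|w0 W0] //= _; exact: mem_last. Qed.

Lemma cyc_walk (L : rel nat) (e : nat) (S : seq nat) :
  (forall f, f \in S -> reach L e f /\ reach L f e) ->
  (exists g, L e g /\ reach L g e) ->
  exists W, [/\ W != [::], path L e W, last e W = e & forall f, f \in S -> f \in W].
Proof.
move=> HS [g [Lg [pg [hpg lpg]]]].
elim: S HS => [|f S IH] HS.
  by exists (g :: pg); split => //=; rewrite Lg.
have [W [nW pW lW cW]] : exists W, [/\ W != [::], path L e W, last e W = e & forall f, f \in S -> f \in W].
  by apply: IH => f' hf'; apply: HS; rewrite inE hf' orbT.
have [[p1 [hp1 lp1]] [p2 [hp2 lp2]]] := HS f (mem_head _ _).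
exists (W ++ p1 ++ p2); split.
- by rewrite -size_eq0 size_cat addn_eq0 negb_and size_eq0 nW.
- by rewrite !cat_path pW lW hp1 lp1 hp2.
- by rewrite !last_cat lW lp1.
- move=> f'; rewrite inE => /orP [/eqP ->|hf']; last by rewrite mem_cat cW.
  case: (eqVneq f e) => [->|ne].
    by rewrite mem_cat -{1}lW last_in.
  have np1 : p1 != [::] by case: p1 hp1 lp1 => //= _ eq; move: ne; rewrite eq eqxx.
  by rewrite !mem_cat -lp1 last_in // orbT.
Qed.

Definition zw (e : nat) W j := if j is j'.+1 then nth e W (j' %% size W) else e.

Lemma zw_step (L : rel nat) e W : W != [::] -> path L e W -> last e W = e ->
  forall j, L (zw e W j) (zw e W j.+1).
Proof.
move=> nW pW lW; have n0 : 0 < size W by rewrite lt0n size_eq0.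
have PW := pathP e pW.
case => [|j] /=.
  by rewrite mod0n; apply: (PW 0).
set k := j %% size W.
have hk : k < size W by rewrite ltn_mod.
have -> : j.+1 %% size W = k.+1 %% size W by rewrite /k -[in RHS]addn1 modnDml addn1.
case: (ltnP k.+1 (size W)) => hk1.
  by rewrite modn_small //; apply: (PW k.+1).
have ek : k.+1 = size W by apply/eqP; rewrite eqn_leq hk1 hk.
rewrite ek modnn.
have -> : nth e W k = e by rewrite -[RHS]lW -nth_last -ek.
by apply: (PW 0).
Qed.

Lemma zw_cover e W f : f \in W -> forall M, exists j, M <= j /\ zw e W j = f.
Proof.
move=> hf M; have n0 : 0 < size W by case: W hf.
exists (index f W + M * size W).+1; split.
  apply: leqW; apply: leq_trans (leq_addl _ _); by rewrite leq_pmulr.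
by rewrite /= addnC modnMDl modn_small ?index_mem // nth_index.
Qed.

Definition AB (w : word 'I_3) i := (nat_of_ord (w i) == 0) && (nat_of_ord (w i.+1) == 1).
Definition BA (w : word 'I_3) i := (nat_of_ord (w i) == 1) && (nat_of_ord (w i.+1) == 0).

Definition deltaA (t : bool * 'I_3 * bool) : bool :=
  if nat_of_ord t.1.2 == 0 then t.2 else if nat_of_ord t.1.2 == 1 then ~~ t.2 else true.
Definition colA (t : bool * 'I_3 * bool) : {set bool} :=
  if [&& t.1.1, nat_of_ord t.1.2 == 1 & ~~ t.2] then [set false]
  else if [&& ~~ t.1.1, nat_of_ord t.1.2 == 0 & t.2] then [set true] else set0.

Definition Aaut : automaton 'I_3 :=
  @Automaton 'I_3 bool bool true deltaA colA (@genCoBuchi_cond bool).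

Lemma runA_facts w r i : is_run Aaut w r ->
  r i = ((r i).1.1, w i, (r i).2) /\ deltaA (r i) /\ (r i).2 = (r i.+1).1.1.
Proof.
case=> _ /(_ i) [hd [hl ht]]; split => //.
by case: (r i) hl => [[x y] z] /= ->.
Qed.

Lemma notaccA w : (forall n, exists m, n <= m /\ AB w m) ->
  (forall n, exists m, n <= m /\ BA w m) -> ~ accepts Aaut w.
Proof.
move=> hab hba [r [hr [c [n hn]]]].
case: c hn => hn.
- have [m [hm /andP [h1 h2]]] := hba n.
  have [e1 [d1 t1]] := runA_facts m hr.
  have [e2 [d2 t2]] := runA_facts m.+1 hr.
  move: d1 d2 (hn m.+1 (leqW hm)).
  move/eqP: h1 => h1; move/eqP: h2 => h2.
  rewrite e1 e2 /deltaA /= h1 t1 /colA /= h2 /=.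
  by case: (r m.+1).1.1 => //=; case: (r m.+1).2 => //= _ _; rewrite inE.
- have [m [hm /andP [h1 h2]]] := hab n.
  have [e1 [d1 t1]] := runA_facts m hr.
  have [e2 [d2 t2]] := runA_facts m.+1 hr.
  move: d1 d2 (hn m.+1 (leqW hm)).
  move/eqP: h1 => h1; move/eqP: h2 => h2.
  rewrite e1 e2 /deltaA /= h1 t1 /colA /= h2 /=.
  by case: (r m.+1).1.1 => //=; case: (r m.+1).2 => //= _ _; rewrite inE.
Qed.

Lemma accA_noAB w N : (forall m, N <= m -> ~~ AB w m) -> accepts Aaut w.
Proof.
move=> hN.
pose sA i := if i is i'.+1 then nat_of_ord (w i') == 0 else true.
exists (fun i => (sA i, w i, sA i.+1)); split.
  split => // i; split => //; rewrite /= /deltaA /=.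
  by case: (w i : nat) => [|[|]].
exists false, N.+1 => [[|m]] // hm.
have := hN m hm; rewrite /AB /= /colA /=.
by case: (nat_of_ord (w m)) => [|?]; case: (nat_of_ord (w m.+1)) => [|[|?]] //=; rewrite ?inE.
Qed.

Lemma accA_noBA w N : (forall m, N <= m -> ~~ BA w m) -> accepts Aaut w.
Proof.
move=> hN.
pose sB i := if i is i'.+1 then nat_of_ord (w i') != 1 else true.
exists (fun i => (sB i, w i, sB i.+1)); split.
  split => // i; split => //.
  rewrite /= /deltaA /=; by case: (nat_of_ord (w i)) => [|[|]].
exists true, N.+1 => [[|m]] // hm.
have := hN m hm; rewrite /BA /= /colA /=.
by case: (nat_of_ord (w m)) => [|[|?]]; case: (nat_of_ord (w m.+1)) => [|[|?]] //=; rewrite ?inE.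
Qed.

Definition stepS (s : option 'I_3 * bool) (x : 'I_3) : option 'I_3 * bool :=
  (Some x, if s.1 is Some y then
             (if (nat_of_ord y == 0) && (nat_of_ord x == 1) then true
              else if (nat_of_ord y == 1) && (nat_of_ord x == 0) then false else s.2)
           else s.2).
Definition Sf (h : seq 'I_3) := foldl stepS (None, false) h.
Definition stA (s : option 'I_3 * bool) : bool :=
  if s.1 is Some x then (if nat_of_ord x == 0 then true else if nat_of_ord x == 1 then false else s.2)
  else true.
Definition sigmaA (h : seq 'I_3) : bool * 'I_3 * bool :=
  match rev h with
  | x :: rh => (stA (Sf (rev rh)), x, stA (Sf h))
  | [::] => (true, ord0, true)
  end.

Lemma sigmaA_prefix w i :
  sigmaA (Defs.prefix w i.+1) = (stA (Sf (Defs.prefix w i)), w i, stA (stepS (Sf (Defs.prefix w i)) (w i))).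
Proof.
by rewrite /sigmaA /Defs.prefix mkseqS rev_rcons revK /Sf foldl_rcons.
Qed.

Lemma hdA : history_deterministic Aaut.
Proof.
exists sigmaA => w /=.
pose Sw i := Sf (Defs.prefix w i).
have SwS i : Sw i.+1 = stepS (Sw i) (w i) by rewrite /Sw /Defs.prefix mkseqS /Sf foldl_rcons.
have er i : sigmaA (Defs.prefix w i.+1) = (stA (Sw i), w i, stA (Sw i.+1)) by rewrite sigmaA_prefix SwS.
split.
  split; first by rewrite er.
  move=> i; rewrite !er /= SwS; split => //.
  by rewrite /= /deltaA /stA /=; case: (nat_of_ord (w i)) => [|[|]].
move=> hacc.
pose md i := (Sw i).2.
have stS i : stA (Sw i.+1) = if nat_of_ord (w i) == 0 then true else if nat_of_ord (w i) == 1 then false else md i.+1.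
  by rewrite /md SwS.
have mdS i : md i.+2 = if AB w i then true else if BA w i then false else md i.+1.
  by rewrite /md (SwS i.+1) SwS.
have colF i : false \in colA (stA (Sw i.+1), w i.+1, stA (Sw i.+2)) ->
    AB w i || ((nat_of_ord (w i) == 2) && md i.+1).
  rewrite /colA /= !stS /AB.
  move: (md i.+1) (md i.+2) => m1 m2.
  have := ltn_ord (w i); case: (nat_of_ord (w i)) => [|[|[|a]]] // _;
  by case: (nat_of_ord (w i.+1)) => [|[|b]]; case: m1; case: m2; rewrite /= ?inE.
have colT i : true \in colA (stA (Sw i.+1), w i.+1, stA (Sw i.+2)) ->
    BA w i || ((nat_of_ord (w i) == 2) && ~~ md i.+1).
  rewrite /colA /= !stS /BA.
  move: (md i.+1) (md i.+2) => m1 m2.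
  have := ltn_ord (w i); case: (nat_of_ord (w i)) => [|[|[|a]]] // _;
  by case: (nat_of_ord (w i.+1)) => [|[|b]]; case: m1; case: m2; rewrite /= ?inE.
have keyF : (exists K, forall i, K <= i -> ~~ AB w i && ~~ md i.+1) ->
    genCoBuchi_cond (fun i => colA (sigmaA (Defs.prefix w i.+1))).
  move=> [K hK]; exists false, K.+1 => [[|m]] // hm; rewrite er.
  apply/negP => /colF; have /andP [h1 h2] := hK m hm.
  by rewrite (negbTE h1) (negbTE h2) andbF.
have keyT : (exists K, forall i, K <= i -> ~~ BA w i && md i.+1) ->
    genCoBuchi_cond (fun i => colA (sigmaA (Defs.prefix w i.+1))).
  move=> [K hK]; exists true, K.+1 => [[|m]] // hm; rewrite er.
  apply/negP => /colT; have /andP [h1 h2] := hK m hm.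
  by rewrite (negbTE h1) h2 andbF.
have mconst N : (forall m, N <= m -> ~~ AB w m && ~~ BA w m) -> forall j, N.+1 <= j -> md j = md N.+1.
  move=> hN j /subnKC <-; elim: (j - N.+1) => [|d IH]; first by rewrite addn0.
  rewrite addnS addSn mdS.
  have /andP [/negbTE -> /negbTE ->] := hN (N + d) (leq_addr _ _).
  by rewrite -addSn.
have mfalse N m0 : (forall m, N <= m -> ~~ AB w m) -> BA w m0 -> N <= m0 -> forall j, m0.+2 <= j -> md j = false.
  move=> hN hb hm0 j /subnKC <-; elim: (j - m0.+2) => [|d IH].
    by rewrite addn0 mdS hb (negbTE (hN _ hm0)).
  rewrite addnS !addSn mdS (negbTE (hN _ _)); last first.
    by apply: leq_trans hm0 _; rewrite -addnS leq_addr.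
  by case: ifP => // _; rewrite -!addSn.
have mtrue N m0 : (forall m, N <= m -> ~~ BA w m) -> AB w m0 -> N <= m0 -> forall j, m0.+2 <= j -> md j = true.
  move=> hN hb hm0 j /subnKC <-; elim: (j - m0.+2) => [|d IH].
    by rewrite addn0 mdS hb.
  rewrite addnS !addSn mdS.
  case: ifP => // _; rewrite (negbTE (hN _ _)); last first.
    by apply: leq_trans hm0 _; rewrite -addnS leq_addr.
  by rewrite -!addSn.
have both N : (forall m, N <= m -> ~~ AB w m && ~~ BA w m) ->
    genCoBuchi_cond (fun i => colA (sigmaA (Defs.prefix w i.+1))).
  move=> hN; case hmd : (md N.+1).
    apply: keyT; exists N => i hi; have /andP [_ ->] := hN i hi.
    by rewrite (mconst N hN i.+1 hi) hmd.
  apply: keyF; exists N => i hi; have /andP [-> _] := hN i hi.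
  by rewrite (mconst N hN i.+1 hi) hmd.
have [[N hN]|[N hN]] : (exists N, forall m, N <= m -> ~~ AB w m) \/ (exists N, forall m, N <= m -> ~~ BA w m).
  apply: NNPP => H; apply: (notaccA _ _ hacc) => n; apply: NNPP => H2; apply: H.
    by left; exists n => m hm; apply/negP => hab; apply: H2; exists m.
  by right; exists n => m hm; apply/negP => hab; apply: H2; exists m.
- case: (classic (exists m0, N <= m0 /\ BA w m0)) => [[m0 [hm0 hb]]|H].
    apply: keyF; exists (maxn N m0.+2) => i; rewrite geq_max => /andP [h1 h2].
    by rewrite hN // (mfalse N m0 hN hb hm0) // (leq_trans h2).
  apply: (both N) => m hm; rewrite hN //=; apply/negP => hb; apply: H; by exists m.
- case: (classic (exists m0, N <= m0 /\ AB w m0)) => [[m0 [hm0 hb]]|H].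
    apply: keyT; exists (maxn N m0.+2) => i; rewrite geq_max => /andP [h1 h2].
    by rewrite hN // (mtrue N m0 hN hb hm0) // (leq_trans h2).
  apply: (both N) => m hm; rewrite hN // andbT; apply/negP => hb; apply: H; by exists m.
Qed.

Lemma recur (T : finType) (f : nat -> T) :
  exists N, forall i, N <= i -> forall M, exists j, M <= j /\ f j = f i.
Proof.
have H : forall l : seq T, exists N, forall x, x \in l ->
    (forall M, exists j, M <= j /\ f j = x) \/ (forall j, N <= j -> f j <> x).
  elim => [|x l [N IH]]; first by exists 0.
  case: (classic (forall M, exists j, M <= j /\ f j = x)) => hx.
    exists N => y; rewrite inE => /orP [/eqP -> |hy]; [by left | exact: IH].
  have [M hM] : exists M, forall j, M <= j -> f j <> x.
    apply: NNPP => H1; apply: hx => M; apply: NNPP => H2; apply: H1; exists M => j hj fj.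
    by apply: H2; exists j.
  exists (maxn N M) => y; rewrite inE => /orP [/eqP -> |hy].
    by right => j hj; apply: hM; apply: leq_trans hj; rewrite leq_maxr.
  case: (IH y hy) => [h|h]; [by left | right => j hj; apply: h].
  by apply: leq_trans hj; rewrite leq_maxl.
have [N HN] := H (enum T).
exists N => i hi; case: (HN (f i) (mem_enum _ _)) => // h.
by have := h i hi.
Qed.

Definition pb (P : Prop) : bool := if excluded_middle_informative P then true else false.
Lemma pbE (P : Prop) : pb P <-> P.
Proof. by rewrite /pb; case: excluded_middle_informative. Qed.

Lemma fold_mem (c : nat -> bool) (v : nat -> nat) l s' : s' \in l -> c s' ->
  N.testbit (foldr (fun s' acc => if c s' then N.setbit acc (nN (v s')) else acc) 0%num l) (nN (v s')).
Proof.
elim: l => [|x l IH] //; rewrite inE => /orP [/eqP <-|hs] hc /=.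
  by rewrite hc testbit_setbit eqxx.
case: (c x); last by apply: IH.
by rewrite testbit_setbit IH // orbT.
Qed.

Lemma bit_lt bs t : bit bs t -> t < size bs.
Proof. by rewrite /bit; case: ltnP => // h; rewrite nth_default. Qed.

Lemma lower (B : automaton 'I_3) : is_genBuchi B ->
  (forall w : word 'I_3, accepts B w <-> ~ accepts Aaut w) -> 2 < #|st B|.
Proof.
move=> hgb hL; rewrite ltnNge; apply/negP => hcard.
pose phi (s : st B) : nat := enum_rank s.
have phi_lt s : phi s < 2 by apply: leq_trans (ltn_ord _) hcard.
have phi_inj : injective phi by move=> x y /ord_inj /enum_rank_inj.
pose pi (t : st B * 'I_3 * st B) := tr (phi t.1.1) t.1.2 (phi t.2).
have pi_f t : [/\ tsrc (pi t) = phi t.1.1, tlab (pi t) = t.1.2, ttgt (pi t) = phi t.2 & pi t < 12].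
  by apply: tr_facts.
have pi_inj : injective pi.
  move=> [[s1 l1] t1] [[s2 l2] t2] he.
  have [a1 b1 c1 _] := pi_f (s1, l1, t1); have [a2 b2 c2 _] := pi_f (s2, l2, t2).
  move: a1 b1 c1; rewrite he a2 b2 c2 /= => /phi_inj -> /ord_inj -> /phi_inj -> //.
pose G : word 'I_3 := fun i => inord (vw (i %% 7)).
have G_val i : nat_of_ord (G i) = vw (i %% 7).
  by rewrite inordK //; have [_ ? _] := k_facts (ltn_pmod i (isT : 0 < 7)).
have Gm q r : nat_of_ord (G (q * 7 + r)) = vw (r %% 7) by rewrite G_val modnMDl.
have notAG : ~ accepts Aaut G.
  apply: notaccA => n.
    exists (n * 7); split; first by rewrite leq_pmulr.
    by rewrite /AB -[n * 7]addn0 -addnS !Gm.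
  exists (n * 7 + 3); split; first by apply: leq_trans (leq_addr _ _); rewrite leq_pmulr.
  by rewrite /BA -addnS !Gm.
have [rho [[r0 hr] hacc]] : accepts B G by apply/hL.
move/hgb: hacc => hacc.
have rho_lab i : nat_of_ord (rho i).1.2 = vw (i %% 7) by have [_ [-> _]] := hr i.
have [N HN] := recur (fun i => (rho i, (inord (i %% 7) : 'I_7))).
have HX i j : (rho j, (inord (j %% 7) : 'I_7)) = (rho i, inord (i %% 7)) -> rho j = rho i /\ j %% 7 = i %% 7.
  case=> -> /(congr1 val); rewrite /= !inordK ?ltn_pmod //.
pose Ip t := exists i, N <= i /\ pi (rho i) = t.
pose bs := [seq pb (Ip t) | t <- iota 0 12].
have bitE t : t < 12 -> bit bs t = pb (Ip t) by move=> ht; rewrite /bit nth_iota_map.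
have bit_rho i : N <= i -> bit bs (pi (rho i)).
  move=> hi; have [_ _ _ hlt] := pi_f (rho i); rewrite bitE //; apply/pbE; by exists i.
have bitI t : bit bs t -> Ip t.
  move=> hb; have ht : t < 12 by have := bit_lt hb; rewrite size_map size_iota.
  by move: hb; rewrite bitE // => /pbE.
pose node i := nd (phi (rho i).1.1) (i %% 7).
have node_lt i : node i < 14 by have [_ _ h] := nd_facts (phi_lt (rho i).1.1) (ltn_pmod i (isT : 0 < 7)); exact: h.
have modS i : i.+1 %% 7 = sc7 (i %% 7).
  have [_ _ ->] := k_facts (ltn_pmod i (isT : 0 < 7)).
  by rewrite -[in RHS]addn1 modnDml addn1.
have tgt_rho i : (rho i).2 = (rho i.+1).1.1 by have [_ [_ ->]] := hr i.
have step j : N <= j -> N.testbit (nth 0%num (prodA bs) (node j)) (nN (node j.+1)).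
  move=> hj; rewrite /prodA nth_iota_map //.
  have [-> -> _] := nd_facts (phi_lt (rho j).1.1) (ltn_pmod j (isT : 0 < 7)).
  rewrite /node -tgt_rho modS.
  apply: (@fold_mem (fun s' => bit bs (tr (phi (rho j).1.1) (vw (j %% 7)) s'))
                   (fun s' => nd s' (sc7 (j %% 7))) [:: 0; 1] (phi (rho j).2)).
    by have := phi_lt (rho j).2; case: (phi _) => [|[|]].
  by rewrite -rho_lab; apply: bit_rho.
have bs_size : size bs = 12 by rewrite size_map size_iota.
have /andP [hcl hPQ] : closedm 14 (prodA bs) (closureA 14 (prodA bs)) &&
    (Pc bs ==> (Qc (0,1) bs || Qc (1,0) bs)).
  have := fincheck_ok; rewrite /fincheck => /allP; apply; by rewrite -bs_size allbl_mem.
set R := closureA 14 (prodA bs) in hcl.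
have path_R i d : N <= i -> getm R (node i) (node (i + d)).
  move=> hi; elim: d => [|d IH]; first by rewrite addn0; apply: (closedm_refl hcl).
  rewrite addnS; apply: (closedm_step hcl (node_lt i) (node_lt (i + d)) IH).
  by apply: step; apply: leq_trans (leq_addr _ _).
have path_R' i j : N <= i -> i <= j -> getm R (node i) (node j).
  by move=> hi /subnKC <-; apply: path_R.
have hP : Pc bs.
  rewrite /Pc -/R; apply/andP; split.
    apply/hasP; exists (pi (rho N)); last exact: bit_rho.
    by have [_ _ _ h] := pi_f (rho N); rewrite mem_iota.
  apply/hasP; exists (node N); first by rewrite mem_iota add0n node_lt.
  apply/allP => t _; apply/implyP => /bitI [i [hi <-]].
  have [-> -> -> _] := pi_f (rho i).
  apply/hasP; exists (i %% 7).
    by rewrite rho_lab; have [h _ _] := k_facts (ltn_pmod i (isT : 0 < 7)).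
  apply/andP; split; first by apply: path_R'.
  rewrite tgt_rho -modS -/(node i.+1).
  have [j [hj /HX [ej mj]]] := HN N (leqnn N) i.+1.
  have -> : node N = node j by rewrite /node ej mj.
  apply: path_R' => //; by apply: leq_trans (leqnSn _).
have hQ : Qc (0,1) bs || Qc (1,0) bs by apply: (implyP hPQ).
pose idx t := match excluded_middle_informative (Ip t) with
  | left H => proj1_sig (constructive_indefinite_description _ H) | right _ => N end.
have idx_spec t : Ip t -> N <= idx t /\ pi (rho (idx t)) = t.
  rewrite /idx; case: excluded_middle_informative => // H _.
  by case: (constructive_indefinite_description _ H).
pose lift t := rho (idx t).
have lift_rho i : N <= i -> lift (pi (rho i)) = rho i.
  move=> hi; apply: pi_inj; apply: (idx_spec _ _).2; by exists i.
have final p : (forall w N0, (forall m, N0 <= m -> (nat_of_ord (w m), nat_of_ord (w m.+1)) != p) ->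
    accepts Aaut w) -> Qc p bs -> False.
  move=> hAcc /andP [/hasP [e0 he0 /andP [hb0 /allP hall]] /allP hsucc].
  set L := Eline p bs.
  have Lbit a b : L a b -> bit bs a && bit bs b by case/and4P => -> ->.
  have he0lt : e0 < 12 by move: he0; rewrite mem_iota.
  have reachE f : bit bs f -> reach L e0 f /\ reach L f e0.
    move=> hf; have hflt : f < 12 by have := bit_lt hf; rewrite bs_size.
    have hmem : f \in iota 0 12 by rewrite mem_iota.
    have /implyP /(_ hf) /andP [h1 h2] := hall f hmem.
    by split; apply: closure_sound h1 || apply: closure_sound h2.
  pose estar := pi (rho N).
  have hbs : bit bs estar by apply: bit_rho.
  have Hst f : bit bs f -> reach L estar f /\ reach L f estar.
    move=> hf; split.
      by apply: reach_trans (reachE _ hbs).2 (reachE _ hf).1.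
    by apply: reach_trans (reachE _ hf).2 (reachE _ hbs).1.
  have [W [nW pW lW cW]] : exists W, [/\ W != [::], path L estar W, last estar W = estar &
      forall f, f \in filter (bit bs) (iota 0 12) -> f \in W].
    apply: cyc_walk.
      by move=> f; rewrite mem_filter => /andP [hf _]; apply: Hst.
    have hmem : estar \in iota 0 12 by rewrite mem_iota; have [_ _ _ ->] := pi_f (rho N).
    have /implyP /(_ hbs) /hasP [g _ hg] := hsucc estar hmem.
    exists g; split => //; have /andP [_ hbg] := Lbit _ _ hg; exact: (Hst g hbg).2.
  pose z := zw estar W.
  have zstep := zw_step nW pW lW.
  have zbit j : bit bs (z j) by case: j => [|j] //; have /andP [_ ->] := Lbit _ _ (zstep j).
  have lift_pi j : pi (lift (z j)) = z j by apply: (idx_spec _ (bitI _ (zbit j))).2.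
  have rbN : lift (z 0) = rho N by apply: lift_rho.
  pose rb j := if j < N then rho j else lift (z (j - N)).
  pose wb j := (rb j).1.2.
  have lift_tr j : (lift (z j)).2 = (lift (z j.+1)).1.1.
    apply: phi_inj; have := zstep j; case/and4P => _ _ /eqP e _.
    have [_ _ t1 _] := pi_f (lift (z j)); have [s1 _ _ _] := pi_f (lift (z j.+1)).
    rewrite lift_pi in t1; rewrite lift_pi in s1.
    by rewrite -t1 -s1 e.
  have lift_lab j : nat_of_ord (lift (z j)).1.2 = tlab (z j).
    have [_ l1 _ _] := pi_f (lift (z j)); rewrite lift_pi in l1.
    by rewrite l1.
  have runb : is_run B wb rb.
    split.
      rewrite /rb; case: ifP => [_|]; first exact: r0.
      by rewrite ltnNge leqn0 => /negbFE /eqP eN; rewrite eN sub0n rbN eN.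
    move=> j; split; first by rewrite /rb; case: ifP => _; [have [] := hr j | have [] := hr (idx (z (j - N)))].
    split => //; rewrite /rb.
    case: (ltnP j.+1 N) => hj1.
      by rewrite (ltn_trans (ltnSn j) hj1); have [_ [_ ->]] := hr j.
    case: (ltnP j N) => hj.
      have eN : j.+1 = N by apply/eqP; rewrite eqn_leq hj hj1.
      by rewrite -eN subnn rbN -eN; have [_ [_ ->]] := hr j.
    by rewrite subSn // lift_tr.
  have accb : accepting_run B rb.
    apply/hgb => c n.
    have [m hm hc] := hacc c (maxn n N).
    move: hm; rewrite geq_max => /andP [hnm hNm].
    have hbt := bit_rho m hNm.
    have hlt : pi (rho m) < 12 by have [_ _ _ ->] := pi_f (rho m).
    have hW : pi (rho m) \in W by apply: cW; rewrite mem_filter hbt mem_iota.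
    have [j [hj zj]] := zw_cover estar hW n.
    exists (N + j); first by apply: leq_trans hj (leq_addl _ _).
    by rewrite /rb ltnNge leq_addr /= addKn /z zj lift_rho.
  have : ~ accepts Aaut wb by apply/hL; exists rb.
  apply; apply: (hAcc wb N) => m hm.
  rewrite /wb /rb ltnNge hm ltnNge (leq_trans hm (leqnSn m)) /= subSn // !lift_lab.
  by have := zstep (m - N); case/and4P.
case/orP: hQ; apply: final => w N0 H.
  by apply: (accA_noAB (N := N0)) => m /H; rewrite /AB -xpair_eqE.
by apply: (accA_noBA (N := N0)) => m /H; rewrite /BA -xpair_eqE.
Qed.

Theorem lemma6 :
  exists (Sigma : finType) (A : automaton Sigma),
    is_genCoBuchi A /\ history_deterministic A /\
    forall B : automaton Sigma,
      is_genBuchi B -> history_deterministic B ->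
      (forall w : word Sigma, accepts B w <-> ~ accepts A w) ->
      #|st A| < #|st B|.
Proof.
exists ('I_3 : finType), Aaut; split; first by move=> x.
split; first exact: hdA.
move=> B hgb _ hL.
have -> : #|st Aaut| = 2 by exact: card_bool.
exact: lower.
Qed.
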